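(* A well-founded order $P$ is up-regular if and only if for every trunk $T$ of $P$ such that the set of levels of $P$ meeting $T$ has a largest element $h$, the set $T\cup L_h$ is a trunk, where $L_h=\{x:\mathrm{Level}(x)=h\}$. In particular, in an up-regular well-founded order, every trunk that is maximal under inclusion and meets a highest level $L_h$ contains $L_h$.
   Context: Orders are partial orders; $x\sim y$ means $x\ne y$ and $x,y$ incomparable. For a well-founded order $P$, $\mathrm{Level}(x)=\sup\{\mathrm{Level}(y)+1:y<x\}$. An element $x$ is up-regular if for all $y,z$ with $\mathrm{Level}(x)<\mathrm{Level}(y)=\mathrm{Level}(z)$ we have $x<y\iff x<z$; $P$ is up-regular if all its elements are. A trunk of $P$ is a subset $T$ such that for pairwise distinct $x,y,z\in T$, $x\sim y$ and $y\sim z$ imply $x\sim z$. *)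

(* Defs.v *)
From Stdlib Require Import Classical.

Definition strict {T : Type} (le : T -> T -> Prop) (x y : T) : Prop :=
  le x y /\ x <> y.

Record wf_order {T : Type} (le : T -> T -> Prop) : Prop := {
  wfo_refl : forall x, le x x;
  wfo_antisym : forall x y, le x y -> le y x -> x = y;
  wfo_trans : forall x y z, le x y -> le y z -> le x z;
  wfo_wf : well_founded (strict le)
}.

Definition incomp {T : Type} (le : T -> T -> Prop) (x y : T) : Prop :=
  x <> y /\ ~ le x y /\ ~ le y x.

(* A (strict) well-order, used as the codomain of the Level function
   (standing in for the class of ordinals). *)
Record well_order {O : Type} (ltO : O -> O -> Prop) : Prop := {
  wo_irrefl : forall a, ~ ltO a a;
  wo_trans : forall a b c, ltO a b -> ltO b c -> ltO a c;
  wo_total : forall a b, ltO a b \/ a = b \/ ltO b a;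
  wo_wf : well_founded ltO
}.

Definition leO {O : Type} (ltO : O -> O -> Prop) (a b : O) : Prop :=
  ltO a b \/ a = b.

(* Level x = sup { Level y + 1 : y < x }, i.e. Level x is the least element
   of O strictly above every Level y with y < x. *)
Definition is_level {T O : Type} (le : T -> T -> Prop) (ltO : O -> O -> Prop)
    (Level : T -> O) : Prop :=
  forall x,
    (forall y, strict le y x -> ltO (Level y) (Level x)) /\
    (forall o, (forall y, strict le y x -> ltO (Level y) o) -> leO ltO (Level x) o).

Definition up_regular_elt {T O : Type} (le : T -> T -> Prop) (ltO : O -> O -> Prop)
    (Level : T -> O) (x : T) : Prop :=
  forall y z, ltO (Level x) (Level y) -> Level y = Level z ->
    (strict le x y <-> strict le x z).

Definition up_regular {T O : Type} (le : T -> T -> Prop) (ltO : O -> O -> Prop)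
    (Level : T -> O) : Prop :=
  forall x, up_regular_elt le ltO Level x.

Definition trunk {T : Type} (le : T -> T -> Prop) (S : T -> Prop) : Prop :=
  forall x y z, S x -> S y -> S z -> x <> y -> y <> z -> x <> z ->
    incomp le x y -> incomp le y z -> incomp le x z.

Definition largest_level_meeting {T O : Type} (ltO : O -> O -> Prop)
    (Level : T -> O) (S : T -> Prop) (h : O) : Prop :=
  (exists x, S x /\ Level x = h) /\ (forall y, S y -> leO ltO (Level y) h).

Definition level_set {T O : Type} (Level : T -> O) (h : O) (x : T) : Prop :=
  Level x = h.

Definition maximal_trunk {T : Type} (le : T -> T -> Prop) (S : T -> Prop) : Prop :=
  trunk le S /\
  forall S', trunk le S' -> (forall x, S x -> S' x) -> (forall x, S' x -> S x).

(* Main.v *)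
Require Import Defs.
From Stdlib Require Import Classical.

Lemma fwd_aux (T O : Type) (le : T -> T -> Prop) (ltO : O -> O -> Prop)
    (Level : T -> O)
    (HO : well_order ltO) (HL : is_level le ltO Level)
    (UR : up_regular le ltO Level) (S : T -> Prop) (h : O)
    (HS : trunk le S) (Hh : largest_level_meeting ltO Level S h) :
  forall x y z, (S x \/ Level x = h) -> (S y \/ Level y = h) -> (S z \/ Level z = h) ->
    incomp le x y -> incomp le y z -> x <> z -> le x z -> False.
Proof.
  intros x y z Hx Hy Hz Ixy Iyz nxz lxz.
  destruct HO as [irr tr tot _].
  assert (lvl : forall a b, strict le a b -> ltO (Level a) (Level b))
    by (intros a b H; exact (proj1 (HL b) a H)).
  destruct Hh as [[w0 [Sw0 Lw0]] Hmax].
  assert (lvlh : forall a, (S a \/ Level a = h) -> leO ltO (Level a) h).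
  { intros a [Ha|Ha]; [apply Hmax; auto | right; auto]. }
  assert (sxz : strict le x z) by (split; auto).
  pose proof (lvl _ _ sxz) as Lxz.
  destruct (lvlh z Hz) as [Lz | Lz].
  -
    assert (Sz : S z) by (destruct Hz as [Hz|Hz]; [auto| rewrite Hz in Lz; exfalso; eapply irr; eauto]).
    assert (Sx : S x) by (destruct Hx as [Hx|Hx]; [auto| rewrite Hx in Lxz; exfalso; eapply irr; eauto]).
    destruct (classic (S y)) as [Sy|nSy].
    + pose proof (HS x y z Sx Sy Sz (proj1 Ixy) (proj1 Iyz) nxz Ixy Iyz) as [_ [H _]]; auto.
    + assert (Ly : Level y = h) by (destruct Hy; tauto).
      assert (Ix : incomp le x w0).
      { split; [intro E; subst w0; rewrite Lw0 in Lxz; eapply irr; eauto|].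
        split.
        - intro H. destruct (classic (x = w0)) as [E|E].
          { subst w0; rewrite Lw0 in Lxz; eapply irr; eauto. }
          assert (Hs : strict le x y).
          { apply (proj1 (UR x w0 y (ltac:(rewrite Lw0; eauto)) (ltac:(congruence)))). split; auto. }
          apply (proj1 (proj2 Ixy)); apply Hs.
        - intro H. destruct (classic (w0 = x)) as [E|E].
          { subst w0; rewrite Lw0 in Lxz; eapply irr; eauto. }
          pose proof (lvl w0 x (conj H E)) as L1. rewrite Lw0 in L1.
          eapply irr; eauto. }
      assert (Iz : incomp le z w0).
      { split; [intro E; subst w0; rewrite Lw0 in Lz; eapply irr; eauto|].
        split.
        - intro H. destruct (classic (z = w0)) as [E|E].
          { subst w0; rewrite Lw0 in Lz; eapply irr; eauto. }
          assert (Hs : strict le z y).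
          { apply (proj1 (UR z w0 y (ltac:(rewrite Lw0; eauto)) (ltac:(congruence)))). split; auto. }
          apply (proj2 (proj2 Iyz)); apply Hs.
        - intro H. destruct (classic (w0 = z)) as [E|E].
          { subst w0; rewrite Lw0 in Lz; eapply irr; eauto. }
          pose proof (lvl w0 z (conj H E)) as L1. rewrite Lw0 in L1.
          eapply irr; eauto. }
      assert (Iw : incomp le w0 z) by (destruct Iz as [a [b c]]; split; [auto|split; auto]).
      pose proof (HS x w0 z Sx Sw0 Sz (proj1 Ix) (proj1 Iw) nxz Ix Iw) as [_ [H _]]; auto.
  -
    assert (Lxh : ltO (Level x) h) by (rewrite <- Lz; auto).
    assert (Sx : S x) by (destruct Hx as [Hx|Hx]; [auto| rewrite Hx in Lxh; exfalso; eapply irr; eauto]).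
    assert (Lyh : ltO (Level y) h).
    { destruct (lvlh y Hy) as [H|H]; auto. exfalso.
      assert (Hs : strict le x y).
      { apply (proj1 (UR x z y (ltac:(rewrite Lz; auto)) (ltac:(congruence)))). exact sxz. }
      apply (proj1 (proj2 Ixy)); apply Hs. }
    assert (Sy : S y) by (destruct Hy as [Hy|Hy]; [auto| rewrite Hy in Lyh; exfalso; eapply irr; eauto]).
    assert (sxw : strict le x w0).
    { apply (proj1 (UR x z w0 (ltac:(rewrite Lz; auto)) (ltac:(congruence)))). exact sxz. }
    assert (Iyw : incomp le y w0).
    { split; [intro E; subst w0; rewrite Lw0 in Lyh; eapply irr; eauto|].
      split.
      - intro H. destruct (classic (y = w0)) as [E|E].
        { subst w0; rewrite Lw0 in Lyh; eapply irr; eauto. }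
        assert (Hs : strict le y z).
        { apply (proj1 (UR y w0 z (ltac:(rewrite Lw0; eauto)) (ltac:(congruence)))). split; auto. }
        apply (proj1 (proj2 Iyz)); apply Hs.
      - intro H. destruct (classic (w0 = y)) as [E|E].
        { subst w0; rewrite Lw0 in Lyh; eapply irr; eauto. }
        pose proof (lvl w0 y (conj H E)) as L1. rewrite Lw0 in L1.
        eapply irr; eauto. }
    pose proof (HS x y w0 Sx Sy Sw0 (proj1 Ixy) (proj1 Iyw) (proj2 sxw) Ixy Iyw) as [_ [H _]].
    apply H; apply sxw.
Qed.

Theorem mainTheorem12 (T O : Type) (le : T -> T -> Prop) (ltO : O -> O -> Prop)
    (Level : T -> O)
    (HP : wf_order le) (HO : well_order ltO) (HL : is_level le ltO Level) :
  (up_regular le ltO Level <->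
     (forall (S : T -> Prop) (h : O),
        trunk le S -> largest_level_meeting ltO Level S h ->
        trunk le (fun x => S x \/ level_set Level h x)))
  /\
  (up_regular le ltO Level ->
     forall (S : T -> Prop) (h : O),
       maximal_trunk le S -> largest_level_meeting ltO Level S h ->
       forall x, level_set Level h x -> S x).
Proof.
  assert (fwd : up_regular le ltO Level ->
     (forall (S : T -> Prop) (h : O),
        trunk le S -> largest_level_meeting ltO Level S h ->
        trunk le (fun x => S x \/ level_set Level h x))).
  { intros UR S h HS Hh x y z Hx Hy Hz nxy nyz nxz Ixy Iyz.
    unfold level_set in *.
    split; [auto|split].
    - intro H. eapply (fwd_aux T O le ltO Level HO HL UR S h HS Hh x y z); eauto.
    - intro H. eapply (fwd_aux T O le ltO Level HO HL UR S h HS Hh z y x); eauto.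
      + destruct Iyz as [a [b c]]; split; [auto|split; auto].
      + destruct Ixy as [a [b c]]; split; [auto|split; auto]. }
  split; [split; [exact fwd|] |].
  - intros H x y z Lxy Eyz.
    destruct HO as [irr tr tot _].
    assert (lvl : forall a b, strict le a b -> ltO (Level a) (Level b))
      by (intros a b Hs; exact (proj1 (HL b) a Hs)).
    assert (key : forall y z, ltO (Level x) (Level y) -> Level y = Level z ->
                  strict le x y -> strict le x z).
    { clear y z Lxy Eyz. intros y z Lxy Eyz sxy.
      destruct (classic (strict le x z)) as [|nsxz]; auto. exfalso.
      destruct (classic (y = z)) as [E|nyz]; [subst; auto|].
      pose (S := fun w => w = x \/ w = y).
      assert (HS : trunk le S).
      { intros a b c Ha Hb Hc nab nbc nac. exfalso.
        unfold S in *. destruct Ha, Hb, Hc; subst; congruence. }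
      assert (Hh : largest_level_meeting ltO Level S (Level y)).
      { split. exists y; split; [right|]; auto.
        intros w [->| ->]; [left|right]; auto. }
      pose proof (H S (Level y) HS Hh) as HT.
      assert (Ixz : incomp le x z).
      { split; [intro E; subst; eapply irr; rewrite Eyz in Lxy; eauto|split].
        - intro Hl. apply nsxz. split; auto. intro E; subst; eapply irr; rewrite Eyz in Lxy; eauto.
        - intro Hl. assert (x <> z) by (intro E; subst; eapply irr; rewrite Eyz in Lxy; eauto).
          pose proof (lvl z x (conj Hl (fun E => H0 (eq_sym E)))).
          rewrite <- Eyz in H1. eapply irr; eauto. }
      assert (Izy : incomp le z y).
      { split; [auto|split].
        - intro Hl. pose proof (lvl z y (conj Hl (fun E => nyz (eq_sym E)))). rewrite Eyz in H0. eapply irr; eauto.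
        - intro Hl. pose proof (lvl y z (conj Hl nyz)). rewrite Eyz in H0. eapply irr; eauto. }
      assert (Ixy : incomp le x y).
      { apply (HT x z y); unfold S, level_set; auto.
        - exact (proj1 Ixz).
        - exact (proj2 sxy). }
      apply (proj1 (proj2 Ixy)); apply sxy. }
    split; apply key; congruence.
  - intros UR S h [HS Hmax] Hh x Hx.
    apply (Hmax (fun x => S x \/ level_set Level h x)); auto.
Qed.
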